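(* Let $(\mathcal{C},P)$ be a heaco. Then $(\mathcal{C},P)$ is implicational if and only if $(\mathcal{C},P)$ is a tripos.
   Context: A doctrine is a pair $(\mathcal{C},P)$, $\mathcal{C}$ a category with finite products, $P:\mathcal{C}^{op}\to\mathbf{Pos}$ a functor, $f^*=P(f)$; primary: each $P(A)$ has binary meets preserved by each $f^*$. Elementary: primary and for every $A$ there is $\delta_A\in P(A\times A)$ such that for every $X$ the assignment $\psi\mapsto\langle\pi_1,\pi_2\rangle^*\psi\wedge\langle\pi_2,\pi_3\rangle^*\delta_A$ is a left adjoint $P(X\times A)\to P(X\times A\times A)$ to $(id_X\times\Delta_A)^*$. Graph of $f:X\to A$: $\mathcal{G}(f)=(f\times id_A)^*\delta_A$. Stable initial object: initial $0$ with $X\times0\cong0$ for all $X$. AC: for every $A$ not stable initial and every $\Gamma$, $\pi_\Gamma^*$ ($\pi_\Gamma:\Gamma\times A\to\Gamma$) has a left adjoint $\Sigma_{\pi_\Gamma}$ and each $\psi\in P(\Gamma\times A)$ has a chosen $\epsilon_\psi:\Gamma\to A$ with $\Sigma_{\pi_\Gamma}\psi=\langle id_\Gamma,\epsilon_\psi\rangle^*\psi$ (also with factors swapped). Co-comprehension: each $P(A)$ has a bottom and each $\alpha$ has $\lceil\alpha\rceil:\{\alpha\}^o\to A$ with $\lceil\alpha\rceil^*\alpha=\bot$, universal among $f$ with $f^*\alpha=\bot$; full if $\lceil\beta\rceil$ factoring through $\lceil\alpha\rceil$ implies $\alpha\le\beta$. An eaco is an elementary doctrine with full co-comprehension satisfying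 AC such that for every $f:X\to A$, $\alpha\in P(A)$: $f^*\langle\epsilon_{\mathcal{G}(\lceil\alpha\rceil)},id_A\rangle^*\mathcal{G}(\lceil\alpha\rceil)=\langle\epsilon_{\mathcal{G}(\lceil f^*\alpha\rceil)},id_X\rangle^*\mathcal{G}(\lceil f^*\alpha\rceil)$. Higher order: for every $A$ there are $\mathbb{P}(A)$ and $\in_A\in P(A\times\mathbb{P}(A))$ such that every $\phi\in P(A\times Y)$ equals $(id_A\times\chi_\phi)^*\in_A$ for some $\chi_\phi:Y\to\mathbb{P}(A)$. A heaco is a higher order eaco. Implicational: each $P(A)$ carries an operation $\rightarrow$ with (ii) $f^*(\alpha\rightarrow\beta)=f^*\alpha\rightarrow f^*\beta$; (iii) for every projection $\pi_A:X\times A\to A$, right adjoints $\Pi_{\pi_A}$ of $\pi_A^*$ exist and $\Pi_{\pi_A}(\pi_A^*\alpha\rightarrow\beta)=\alpha\rightarrow\Pi_{\pi_A}\beta$; (iv) (a) $\phi\le\psi\rightarrow\phi$; (b) $\gamma\rightarrow(\phi\rightarrow\psi)\le(\gamma\rightarrow\phi)\rightarrow(\gamma\rightarrow\psi)$; (c) if $\gamma\le\phi\rightarrow\psi$ and $\gamma\le\phi$ then $\gamma\le\psi$; (d) if $\phi\le\psi$ then $\gamma\le\phi\rightarrow\psi$. A tripos is a doctrine such that (i) each $P(A)$ is a Heyting algebra and each $f^*$ a Heyting homomorphism; (ii) for every product projection $f$, $f^*$ has left and right adjoints $\Sigma_f,\Pi_f$ satisfying Beck–Chevalley ($h^*\Sigma_f\gamma=\Sigma_gk^*\gamma$,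 $h^*\Pi_f\gamma=\Pi_gk^*\gamma$ for pullback squares $h\circ g=f\circ k$); (iii) for each $X$ there is $\delta_X\in P(X\times X)$ with $\top_X\le\Delta_X^*\alpha$ iff $\delta_X\le\alpha$ for all $\alpha\in P(X\times X)$; (iv) it is higher order. *)

(* Defs.v *)
From Stdlib Require Import Logic.FunctionalExtensionality.
Set Implicit Arguments.
Unset Strict Implicit.

Record Cat := {
  Ob :> Type;
  Hom : Ob -> Ob -> Type;
  idm : forall A, Hom A A;
  comp : forall A B C, Hom B C -> Hom A B -> Hom A C;
  comp_idl : forall A B (f : Hom A B), comp (idm B) f = f;
  comp_idr : forall A B (f : Hom A B), comp f (idm A) = f;
  comp_assoc : forall A B C D (h : Hom C D) (g : Hom B C) (f : Hom A B),
      comp h (comp g f) = comp (comp h g) f;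
  term : Ob;
  to_term : forall A, Hom A term;
  to_term_uniq : forall A (f : Hom A term), f = to_term A;
  prod : Ob -> Ob -> Ob;
  p1 : forall A B, Hom (prod A B) A;
  p2 : forall A B, Hom (prod A B) B;
  pair : forall X A B, Hom X A -> Hom X B -> Hom X (prod A B);
  p1_pair : forall X A B (f : Hom X A) (g : Hom X B), comp (p1 A B) (pair f g) = f;
  p2_pair : forall X A B (f : Hom X A) (g : Hom X B), comp (p2 A B) (pair f g) = g;
  pair_uniq : forall X A B (h : Hom X (prod A B)),
      h = pair (comp (p1 A B) h) (comp (p2 A B) h)
}.

Arguments idm {c} A.
Arguments comp {c A B C} g f.
Arguments p1 {c A B}.
Arguments p2 {c A B}.
Arguments pair {c X A B} f g.
Arguments prod {c} A B.
Arguments Hom {c} A B.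

Definition iso (C : Cat) (X Y : C) : Prop :=
  exists (f : Hom X Y) (g : Hom Y X), comp g f = idm X /\ comp f g = idm Y.

Definition stable_initial (C : Cat) (Z : C) : Prop :=
  (forall Y : C, exists f : Hom Z Y, forall g : Hom Z Y, g = f) /\
  (forall X : C, iso (prod X Z) Z).

Record Doctrine (C : Cat) := {
  P : C -> Type;
  le : forall A, P A -> P A -> Prop;
  le_refl : forall A (a : P A), le a a;
  le_trans : forall A (a b c : P A), le a b -> le b c -> le a c;
  le_antisym : forall A (a b : P A), le a b -> le b a -> a = b;
  re : forall X A : C, Hom X A -> P A -> P X;
  re_mono : forall X A (f : Hom X A) (a b : P A), le a b -> le (re f a) (re f b);
  re_id : forall A (a : P A), re (idm A) a = a;
  re_comp : forall X Y A (f : Hom X Y) (g : Hom Y A) (a : P A),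
      re (comp g f) a = re f (re g a)
}.

Arguments P {C} d A.
Arguments le {C d A} a b.
Arguments re {C d X A} f a.

Section Notions.
Context {C : Cat} (D : Doctrine C).

Definition is_meet A (a b m : P D A) : Prop :=
  le m a /\ le m b /\ forall c, le c a -> le c b -> le c m.
Definition is_join A (a b j : P D A) : Prop :=
  le a j /\ le b j /\ forall c, le a c -> le b c -> le j c.
Definition is_top A (t : P D A) : Prop := forall c, le c t.
Definition is_bot A (b : P D A) : Prop := forall c, le b c.
(** Heyting implication (relative to the meets of P(A)). *)
Definition is_imp A (a b i : P D A) : Prop :=
  forall c, le c i <-> (forall m, is_meet c a m -> le m b).

Definition primary : Prop :=
  (forall A (a b : P D A), exists m, is_meet a b m) /\
  (forall X A (f : Hom X A) (a b m : P D A),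
      is_meet a b m -> is_meet (re f a) (re f b) (re f m)).

(** Product X x A x A is read as (X x A) x A.
    <pi1,pi2> = p1,  <pi2,pi3> = <p2 o p1, p2>,  id_X x Delta_A = <id, p2>. *)
Definition elementary_with (delta : forall A, P D (prod A A)) : Prop :=
  primary /\
  forall (X A : C) (psi : P D (prod X A)) (phi : P D (prod (prod X A) A)) m,
    is_meet (re p1 psi) (re (pair (comp p2 p1) p2) (delta A)) m ->
    (le m phi <-> le psi (re (pair (idm (prod X A)) p2) phi)).

Definition graph (delta : forall A, P D (prod A A)) X A (f : Hom X A) : P D (prod A A) -> P D (prod X A) :=
  fun d => re (pair (comp f p1) p2) d.
Definition Graph (delta : forall A, P D (prod A A)) X A (f : Hom X A) : P D (prod X A) :=
  graph delta f (delta A).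

Definition higher_order : Prop :=
  forall A : C, exists (PA : C) (inA : P D (prod A PA)),
    forall (Y : C) (phi : P D (prod A Y)), exists chi : Hom Y PA,
      phi = re (pair p1 (comp chi p2)) inA.

Definition implicational : Prop :=
  exists imp : forall A, P D A -> P D A -> P D A,
    (forall X A (f : Hom X A) (a b : P D A), re f (imp A a b) = imp X (re f a) (re f b)) /\
    (* (iii) *)
    (forall X A : C, exists Pi : P D (prod X A) -> P D A,
        (forall (a : P D A) (phi : P D (prod X A)), le (re p2 a) phi <-> le a (Pi phi)) /\
        (forall (a : P D A) (b : P D (prod X A)),
            Pi (imp _ (re p2 a) b) = imp A a (Pi b))) /\
    (forall A (phi psi : P D A), le phi (imp A psi phi)) /\
    (forall A (g phi psi : P D A),
        le (imp A g (imp A phi psi)) (imp A (imp A g phi) (imp A g psi))) /\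
    (forall A (g phi psi : P D A), le g (imp A phi psi) -> le g phi -> le g psi) /\
    (forall A (g phi psi : P D A), le phi psi -> le g (imp A phi psi)).

Definition tripos : Prop :=
  ((forall A : C,
      (exists t : P D A, is_top t) /\ (exists b : P D A, is_bot b) /\
      (forall a b : P D A, exists m, is_meet a b m) /\
      (forall a b : P D A, exists j, is_join a b j) /\
      (forall a b : P D A, exists i, is_imp a b i)) /\
   (forall X A (f : Hom X A),
      (forall t, is_top t -> is_top (re f t)) /\
      (forall b, is_bot b -> is_bot (re f b)) /\
      (forall a b m, is_meet a b m -> is_meet (re f a) (re f b) (re f m)) /\
      (forall a b j, is_join a b j -> is_join (re f a) (re f b) (re f j)) /\
      (forall a b i, is_imp a b i -> is_imp (re f a) (re f b) (re f i)))) /\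
  (exists (Sg1 Pi1 : forall G A : C, P D (prod G A) -> P D G)
          (Sg2 Pi2 : forall A G : C, P D (prod A G) -> P D G),
      (forall G A (g : P D (prod G A)) (b : P D G),
          (le (Sg1 G A g) b <-> le g (re p1 b)) /\
          (le b (Pi1 G A g) <-> le (re p1 b) g)) /\
      (forall A G (g : P D (prod A G)) (b : P D G),
          (le (Sg2 A G g) b <-> le g (re p2 b)) /\
          (le b (Pi2 A G g) <-> le (re p2 b) g)) /\
      (forall (G Dl A : C) (h : Hom Dl G) (g : P D (prod G A)),
          re h (Sg1 G A g) = Sg1 Dl A (re (pair (comp h p1) p2) g) /\
          re h (Pi1 G A g) = Pi1 Dl A (re (pair (comp h p1) p2) g)) /\
      (forall (G Dl A : C) (h : Hom Dl G) (g : P D (prod A G)),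
          re h (Sg2 A G g) = Sg2 A Dl (re (pair p1 (comp h p2)) g) /\
          re h (Pi2 A G g) = Pi2 A Dl (re (pair p1 (comp h p2)) g))) /\
  (forall X : C, exists delta : P D (prod X X),
      forall (a : P D (prod X X)) (t : P D X), is_top t ->
        (le t (re (pair (idm X) (idm X)) a) <-> le delta a)) /\
  higher_order.

End Notions.

(** * Heacos: higher order eacos, with all chosen data *)
Record Heaco (C : Cat) (D : Doctrine C) := {
  h_delta : forall A : C, P D (prod A A);
  h_elem : elementary_with h_delta;
  h_bot : forall A : C, exists b : P D A, is_bot b;
  h_coc_ob : forall A : C, P D A -> C;
  h_coc : forall A (a : P D A), Hom (h_coc_ob a) A;
  h_coc_bot : forall A (a : P D A), is_bot (re (h_coc a) a);
  h_coc_univ : forall A (a : P D A) X (f : Hom X A), is_bot (re f a) ->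
      exists g : Hom X (h_coc_ob a), comp (h_coc a) g = f /\
        forall g' : Hom X (h_coc_ob a), comp (h_coc a) g' = f -> g' = g;
  h_coc_full : forall A (a b : P D A),
      (exists g : Hom (h_coc_ob b) (h_coc_ob a), comp (h_coc a) g = h_coc b) -> le a b;
  (* AC, both factor orders; epsilon chosen *)
  h_eps1 : forall (G A : C) (psi : P D (prod G A)), ~ stable_initial A -> Hom G A;
  h_eps1_spec : forall G A (psi : P D (prod G A)) (H : ~ stable_initial A) (b : P D G),
      le (re (pair (idm G) (h_eps1 psi H)) psi) b <-> le psi (re p1 b);
  h_eps2 : forall (A G : C) (psi : P D (prod A G)), ~ stable_initial A -> Hom G A;
  h_eps2_spec : forall A G (psi : P D (prod A G)) (H : ~ stable_initial A) (b : P D G),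
      le (re (pair (h_eps2 psi H) (idm G)) psi) b <-> le psi (re p2 b);
  h_eaco : forall X A (f : Hom X A) (a : P D A)
      (H1 : ~ stable_initial (h_coc_ob a)) (H2 : ~ stable_initial (h_coc_ob (re f a))),
      re f (re (pair (h_eps2 (Graph h_delta (h_coc a)) H1) (idm A))
               (Graph h_delta (h_coc a)))
      = re (pair (h_eps2 (Graph h_delta (h_coc (re f a))) H2) (idm X))
               (Graph h_delta (h_coc (re f a)));
  h_higher : higher_order D
}.

(* Main.v *)
Require Import Defs.
From Stdlib Require Import ClassicalEpsilon Classical.
Set Implicit Arguments.
Unset Strict Implicit.

Section CatL.
Context {C : Cat}.
Lemma pair_comp (X Y A B : C) (f : Hom Y A) (g : Hom Y B) (h : Hom X Y) :
  comp (pair f g) h = pair (comp f h) (comp g h).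
Proof.
  transitivity (pair (comp p1 (comp (pair f g) h)) (comp p2 (comp (pair f g) h))).
  - apply pair_uniq.
  - rewrite !comp_assoc, p1_pair, p2_pair. reflexivity.
Qed.
Lemma pair_id (A B : C) : pair (@p1 C A B) p2 = idm (prod A B).
Proof.
  transitivity (pair (comp p1 (idm (prod A B))) (comp p2 (idm (prod A B)))).
  - rewrite !comp_idr. reflexivity.
  - symmetry. apply pair_uniq.
Qed.
End CatL.

Section DL.
Context {C : Cat} {D : Doctrine C}.

Lemma yon A (x y : P D A) : (forall c, le c x <-> le c y) -> x = y.
Proof. intro H. apply le_antisym; apply H; apply le_refl. Qed.

Lemma meet_uniq A (a b m m' : P D A) : is_meet a b m -> is_meet a b m' -> m = m'.
Proof. intros (H1&H2&H3) (H1'&H2'&H3'). apply le_antisym; auto. Qed.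

Lemma imp_uniq A (a b i i' : P D A) : is_imp a b i -> is_imp a b i' -> i = i'.
Proof. intros H H'. apply yon. intro c. rewrite (H c), (H' c). tauto. Qed.

Lemma imp_MP A (a b i m : P D A) : is_imp a b i -> is_meet i a m -> le m b.
Proof. intros H Hm. apply (proj1 (H i) (le_refl _)). exact Hm. Qed.

Lemma imp_intro A (a b i c m : P D A) : is_imp a b i -> is_meet c a m -> le m b -> le c i.
Proof. intros H Hm Hb. apply (proj2 (H c)). intros m' Hm'. rewrite (meet_uniq Hm' Hm). exact Hb. Qed.

Lemma meet_glb A (a b m c : P D A) : is_meet a b m -> le c a -> le c b -> le c m.
Proof. intros (_&_&H) ? ?. auto. Qed.
Lemma meet_l A (a b m : P D A) : is_meet a b m -> le m a.
Proof. intros (H&_). exact H. Qed.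
Lemma meet_r A (a b m : P D A) : is_meet a b m -> le m b.
Proof. intros (_&H&_). exact H. Qed.

End DL.

Section Part1.
Context {C : Cat} {D : Doctrine C}.

Lemma imp_char A (a b i c m : P D A) : is_imp a b i -> is_meet c a m -> (le c i <-> le m b).
Proof.
  intros H Hm. rewrite (H c). split.
  - intro K. apply K. exact Hm.
  - intros K m' Hm'. rewrite (meet_uniq Hm' Hm). exact K.
Qed.

Lemma tri_impl : tripos D -> implicational D.
Proof.
  intros [[Hi Hs] [[Sg1 [Pi1 [Sg2 [Pi2 [HS1 [HS2 [BC1 BC2]]]]]]] [Heq Hho]]].
  assert (fimp : forall A (a b : P D A), {i | is_imp a b i}).
  { intros A a b. apply constructive_indefinite_description.
    destruct (Hi A) as (_&_&_&_&K). apply K. }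
  assert (Hm : forall A (a b : P D A), exists m, is_meet a b m).
  { intros A. apply (Hi A). }
  set (imp := fun A (a b : P D A) => proj1_sig (fimp A a b)).
  assert (Himp : forall A (a b : P D A), is_imp a b (imp A a b)).
  { intros. exact (proj2_sig _). }
  clearbody imp.
  exists imp. split; [|split;[|split;[|split;[|split]]]].
  - intros X A f a b. apply imp_uniq with (a := re f a) (b := re f b); [|apply Himp].
    destruct (Hs X A f) as (_&_&_&_&K). apply K. apply Himp.
  - intros X A. exists (Pi2 X A). split.
    + intros a phi. rewrite (proj2 (HS2 X A phi a)). tauto.
    + intros a b. apply yon. intro c.
      destruct (Hm A c a) as [mca Hmca].
      assert (Hp : is_meet (re (@p2 C X A) c) (re (@p2 C X A) a) (re (@p2 C X A) mca)).
      { destruct (Hs _ _ (@p2 C X A)) as (_&_&K&_). apply K; exact Hmca. }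
      rewrite (proj2 (HS2 X A _ c)).
      rewrite (imp_char (Himp _ _ _) Hp).
      rewrite <- (proj2 (HS2 X A _ mca)).
      rewrite (imp_char (Himp _ _ _) Hmca). tauto.
  - intros A phi psi. destruct (Hm A phi psi) as [m Hmm].
    eapply imp_intro; [apply Himp|exact Hmm|eapply meet_l; eauto].
  - intros A g phi psi.
    set (x := imp A g (imp A phi psi)).
    destruct (Hm A x (imp A g phi)) as [m1 H1].
    destruct (Hm A m1 g) as [y Hy].
    eapply imp_intro with (m := m1); [apply Himp| exact H1|].
    eapply imp_intro with (m := y); [apply Himp| exact Hy|].
    destruct (Hm A (imp A phi psi) phi) as [z Hz].
    apply le_trans with z; [|eapply imp_MP; [apply Himp|exact Hz]].
    apply (meet_glb Hz).
    + destruct (Hm A x g) as [w Hw].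
      apply le_trans with w; [|eapply imp_MP; [apply Himp|exact Hw]].
      apply (meet_glb Hw).
      * apply le_trans with m1; [eapply meet_l; eauto| eapply meet_l; eauto].
      * eapply meet_r; eauto.
    + destruct (Hm A (imp A g phi) g) as [w Hw].
      apply le_trans with w; [|eapply imp_MP; [apply Himp|exact Hw]].
      apply (meet_glb Hw).
      * apply le_trans with m1; [eapply meet_l; eauto| eapply meet_r; eauto].
      * eapply meet_r; eauto.
  - intros A g phi psi H1 H2. destruct (Hm A (imp A phi psi) phi) as [m Hmm].
    apply le_trans with m; [apply (meet_glb Hmm); auto|].
    eapply imp_MP; [apply Himp|exact Hmm].
  - intros A g phi psi H1. destruct (Hm A g phi) as [m Hmm].
    eapply imp_intro with (m := m); [apply Himp|exact Hmm|].
    apply le_trans with phi; [eapply meet_r; eauto|exact H1].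
Qed.
End Part1.

Section Gen.
Context {C : Cat} {D : Doctrine C}.

Lemma re_retr X Y (s : Hom X Y) (r : Hom Y X) :
  comp r s = idm X -> forall (z : P D X), re s (re r z) = z.
Proof. intros Hrs z. rewrite <- re_comp, Hrs, re_id. reflexivity. Qed.


Definition swap (A B : C) : Hom (prod A B) (prod B A) := pair p2 p1.
Lemma swap_inv (A B : C) : comp (swap B A) (swap A B) = idm (prod A B).
Proof. unfold swap. rewrite pair_comp, p1_pair, p2_pair. apply pair_id. Qed.

Lemma si_init (Z W : C) : stable_initial Z -> Hom W Z ->
  (forall T : C, exists f : Hom W T, True) /\ (forall T (f g : Hom W T), f = g).
Proof.
  intros [Hin Hiso] w.
  destruct (Hiso W) as (phi & psi & H1 & H2).
  assert (Huniq : forall T (k : Hom (prod W Z) T), k = comp (proj1_sig (constructive_indefinite_description _ (Hin T))) phi).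
  { intros T k. destruct (constructive_indefinite_description _ (Hin T)) as [fz Hfz]. simpl.
    rewrite <- (comp_idr k), <- H1, comp_assoc. f_equal. apply Hfz. }
  split.
  - intro T. exists (comp (comp (proj1_sig (constructive_indefinite_description _ (Hin T))) phi) (pair (idm W) w)). exact I.
  - intros T f g.
    rewrite <- (comp_idr f), <- (comp_idr g).
    rewrite <- (p1_pair (idm W) w).
    rewrite !comp_assoc. f_equal. rewrite (Huniq T (comp f p1)), (Huniq T (comp g p1)). reflexivity.
Qed.
End Gen.

Section Part2.
Context {C : Cat} {D : Doctrine C} (H : Heaco D) (imp : forall {A : C}, P D A -> P D A -> P D A)
 (Hii : forall X A (f : Hom X A) (a b : P D A), re f (imp a b) = imp (re f a) (re f b))
 (Hiii : forall X A : C, exists Pi : P D (prod X A) -> P D A,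
        (forall (a : P D A) (phi : P D (prod X A)), le (re p2 a) phi <-> le a (Pi phi)) /\
        (forall (a : P D A) (b : P D (prod X A)),
            Pi (imp (re p2 a) b) = imp a (Pi b)))
 (Ha : forall A (phi psi : P D A), le phi (imp psi phi))
 (Hc : forall A (g phi psi : P D A), le g (imp phi psi) -> le g phi -> le g psi)
 (Hd : forall A (g phi psi : P D A), le phi psi -> le g (imp phi psi)).

Lemma prim : primary D.
Proof. exact (proj1 (h_elem H)). Qed.
Lemma meet_ex A (a b : P D A) : exists m, is_meet a b m.
Proof. apply (proj1 prim). Qed.
Lemma meet_re X A (f : Hom X A) (a b m : P D A) : is_meet a b m -> is_meet (re f a) (re f b) (re f m).
Proof. apply (proj2 prim). Qed.

Lemma crit A (a b : P D A) : is_bot (re (h_coc H b) a) -> le a b.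
Proof.
  intro Hb. destruct (h_coc_univ H Hb) as [g [Hg _]].
  apply (@h_coc_full _ _ H). exists g. exact Hg.
Qed.

Lemma L1 A (a e : P D A) : is_bot e -> is_bot (imp a e) -> forall t, le t a.
Proof.
  intros He Hie t. apply crit.
  set (k := h_coc H a).
  assert (Hka : is_bot (re k a)) by exact (@h_coc_bot _ _ H _ a).
  assert (Hall : forall x y : P D (h_coc_ob H a), le x y).
  { intros x y.
    apply le_trans with (re k (imp a e)).
    - rewrite Hii. apply Hd. apply Hka.
    - apply le_trans with (re k e); [apply re_mono, Hie|].
      apply le_trans with (re k a); [apply re_mono, He|apply Hka]. }
  intro c. apply Hall.
Qed.

Lemma Hey A (c a m b : P D A) : is_meet c a m -> le m b -> le c (imp a b).
Proof.
  intros Hm Hmb. apply crit.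
  set (k := h_coc H (imp a b)).
  assert (Hk : is_bot (re k (imp a b))) by exact (@h_coc_bot _ _ H _ _).
  rewrite Hii in Hk.
  assert (Hkb : is_bot (re k b)).
  { intro x. apply le_trans with (imp (re k a) (re k b)); [apply Ha|apply Hk]. }
  assert (Htop := L1 Hkb Hk).
  assert (Hmk := meet_re k Hm).
  intro x. apply le_trans with (re k m).
  - apply (meet_glb Hmk); [apply le_refl|apply Htop].
  - apply le_trans with (re k b); [apply re_mono, Hmb|apply Hkb].
Qed.

Lemma imp_is A (a b : P D A) : is_imp a b (imp a b).
Proof.
  intro c. split.
  - intros Hci m Hm. apply Hc with a.
    + apply le_trans with c; [eapply meet_l; eauto|exact Hci].
    + eapply meet_r; eauto.
  - intro K. destruct (meet_ex c a) as [m Hm]. apply Hey with m; auto.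
Qed.

Definition bpres {X A : C} (f : Hom X A) := forall e : P D A, is_bot e -> is_bot (re f e).
Lemma bpres_retr X A (f : Hom X A) (g : Hom A X) : comp g f = idm X -> bpres f.
Proof.
  intros Hgf e He z. rewrite <- (re_retr Hgf z). apply re_mono, He.
Qed.
Lemma bpres_comp X Y A (f : Hom X Y) (g : Hom Y A) : bpres f -> bpres g -> bpres (comp g f).
Proof. intros Hf Hg e He. rewrite re_comp. apply Hf, Hg, He. Qed.
Lemma bpres_p2 X A : bpres (@p2 C X A).
Proof. destruct (Hiii X A) as [Pi [HP _]]. intros e He phi. apply HP. apply He. Qed.
Lemma bpres_p1 A X : bpres (@p1 C A X).
Proof.
  assert (E : @p1 C A X = comp p2 (swap A X)) by (unfold swap; rewrite p2_pair; reflexivity).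
  rewrite E. apply bpres_comp; [|apply bpres_p2].
  apply bpres_retr with (swap X A). apply swap_inv.
Qed.
Lemma bpres_all X A (f : Hom X A) : bpres f.
Proof.
  assert (E : f = comp p1 (pair f (idm X))) by (rewrite p1_pair; reflexivity).
  rewrite E. apply bpres_comp; [|apply bpres_p1].
  apply bpres_retr with p2. apply p2_pair.
Qed.

Definition botf (A : C) : P D A := proj1_sig (constructive_indefinite_description _ (h_bot H A)).
Lemma botf_bot A : is_bot (botf A).
Proof. unfold botf. exact (proj2_sig _). Qed.
Lemma bot_uniq A (e : P D A) : is_bot e -> e = botf A.
Proof. intro He. apply le_antisym; [apply He|apply botf_bot]. Qed.

Definition neg A (a : P D A) := imp a (botf A).
Lemma neg_re X A (f : Hom X A) (a : P D A) : re f (neg a) = neg (re f a).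
Proof. unfold neg. rewrite Hii. f_equal. apply bot_uniq, bpres_all, botf_bot. Qed.

Lemma neg_anti A (x y : P D A) : le x y -> le (neg y) (neg x).
Proof.
  intro Hxy. destruct (meet_ex (neg y) x) as [m Hm]. apply Hey with m; auto.
  apply Hc with y.
  - apply le_trans with (neg y); [eapply meet_l; eauto|apply le_refl].
  - apply le_trans with x; [eapply meet_r; eauto|exact Hxy].
Qed.

Lemma neg_nn A (a : P D A) : neg (neg a) = a.
Proof.
  apply le_antisym.
  - apply crit. set (k := h_coc H a).
    assert (Hka : is_bot (re k a)) by exact (@h_coc_bot _ _ H _ a).
    rewrite !neg_re. rewrite (bot_uniq Hka).
    intro x. apply le_trans with (botf _); [|apply botf_bot].
    apply Hc with (neg (botf (h_coc_ob H a))); [apply le_refl|].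
    apply Hd. apply botf_bot.
  - destruct (meet_ex a (neg a)) as [m Hm]. apply Hey with m; auto.
    apply Hc with a; [eapply meet_r; eauto|eapply meet_l; eauto].
Qed.

Lemma neg_le_iff A (x y : P D A) : le (neg x) (neg y) <-> le y x.
Proof.
  split; [|apply neg_anti]. intro K. rewrite <- (neg_nn x), <- (neg_nn y). apply neg_anti, K.
Qed.
Lemma neg_l_iff A (x y : P D A) : le (neg x) y <-> le (neg y) x.
Proof.
  split; intro K.
  - rewrite <- (neg_nn x). apply neg_anti, K.
  - rewrite <- (neg_nn y). apply neg_anti, K.
Qed.
Lemma neg_r_iff A (x y : P D A) : le x (neg y) <-> le y (neg x).
Proof.
  split; intro K.
  - rewrite <- (neg_nn y). apply neg_anti, K.
  - rewrite <- (neg_nn x). apply neg_anti, K.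
Qed.

Lemma join_is A (a b m : P D A) : is_meet (neg a) (neg b) m -> is_join a b (neg m).
Proof.
  intro Hm. split; [|split].
  - apply neg_r_iff. eapply meet_l; eauto.
  - apply neg_r_iff. eapply meet_r; eauto.
  - intros c Hac Hbc. apply neg_l_iff. apply (meet_glb Hm); apply neg_anti; auto.
Qed.

Lemma join_uniq A (a b j j' : P D A) : is_join a b j -> is_join a b j' -> j = j'.
Proof. intros (H1&H2&H3) (H1'&H2'&H3'). apply le_antisym; auto. Qed.

Lemma top_re X A (f : Hom X A) (t : P D A) : is_top t -> is_top (re f t).
Proof.
  intros Ht c. apply le_trans with (re f (imp t t)).
  - rewrite Hii. apply Hd, le_refl.
  - apply re_mono, Ht.
Qed.


Lemma sg_from_pi X Y (f : Hom X Y) (Pi : P D X -> P D Y)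
  (HPi : forall g b, le b (Pi g) <-> le (re f b) g) g b :
  le (neg (Pi (neg g))) b <-> le g (re f b).
Proof. rewrite neg_l_iff, HPi, neg_re, neg_le_iff. tauto. Qed.

Definition Pi2f (A G : C) (g : P D (prod A G)) : P D G :=
  proj1_sig (constructive_indefinite_description _ (Hiii A G)) g.
Arguments Pi2f : clear implicits.
Lemma Pi2_spec A G (g : P D (prod A G)) (b : P D G) : le b (Pi2f A G g) <-> le (re p2 b) g.
Proof.
  unfold Pi2f. pose proof (proj2_sig (constructive_indefinite_description _ (Hiii A G))) as [HP _].
  rewrite HP. tauto.
Qed.
Definition Sg2f (A G : C) (g : P D (prod A G)) : P D G := neg (Pi2f A G (neg g)).
Arguments Sg2f : clear implicits.
Lemma Sg2_spec A G (g : P D (prod A G)) (b : P D G) : le (Sg2f A G g) b <-> le g (re p2 b).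
Proof. unfold Sg2f. apply sg_from_pi. intros; apply Pi2_spec. Qed.

Definition Pi1f (G A : C) (g : P D (prod G A)) : P D G := Pi2f A G (re (swap A G) g).
Arguments Pi1f : clear implicits.
Lemma Pi1_spec G A (g : P D (prod G A)) (b : P D G) : le b (Pi1f G A g) <-> le (re p1 b) g.
Proof.
  unfold Pi1f. rewrite Pi2_spec. split; intro K.
  - apply (re_mono (swap G A)) in K. rewrite <- !re_comp, swap_inv, re_id in K.
    unfold swap at 1 in K. rewrite p2_pair in K. exact K.
  - apply (re_mono (swap A G)) in K. rewrite <- !re_comp in K.
    unfold swap at 1 in K. rewrite p1_pair in K. exact K.
Qed.
Definition Sg1f (G A : C) (g : P D (prod G A)) : P D G := neg (Pi1f G A (neg g)).
Arguments Sg1f : clear implicits.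
Lemma Sg1_spec G A (g : P D (prod G A)) (b : P D G) : le (Sg1f G A g) b <-> le g (re p1 b).
Proof. unfold Sg1f. apply sg_from_pi. intros; apply Pi1_spec. Qed.

Lemma Sg2_eps A G (g : P D (prod A G)) (Hn : ~ stable_initial A) :
  Sg2f A G g = re (pair (h_eps2 H g Hn) (idm G)) g.
Proof.
  apply le_antisym.
  - apply Sg2_spec. apply (h_eps2_spec H g Hn). apply le_refl.
  - apply (h_eps2_spec H g Hn). apply Sg2_spec. apply le_refl.
Qed.

Lemma triv_fiber A Y (y : Hom Y A) (x z : P D Y) : stable_initial A -> le x z.
Proof.
  intro HSI. apply (@h_coc_full _ _ H).
  destruct (si_init HSI (comp y (h_coc H z))) as [Hex Huq].
  destruct (Hex (h_coc_ob H x)) as [g _]. exists g. apply Huq.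
Qed.

Lemma Sg2_BC A G Dl (h : Hom Dl G) (g : P D (prod A G)) :
  re h (Sg2f A G g) = Sg2f A Dl (re (pair p1 (comp h p2)) g).
Proof.
  set (k := pair (@p1 C A Dl) (comp h p2)).
  apply le_antisym.
  - destruct (classic (stable_initial A)) as [HSI|Hn].
    + apply le_trans with (re h (botf G)).
      * apply re_mono. apply Sg2_spec. apply (triv_fiber (A:=A) p1). exact HSI.
      * apply bpres_all, botf_bot.
    + rewrite (Sg2_eps g Hn). set (e := h_eps2 H g Hn).
      rewrite <- re_comp.
      replace (comp (pair e (idm G)) h) with (comp k (pair (comp e h) (idm Dl))).
      * rewrite re_comp.
        assert (U : le (re k g) (re p2 (Sg2f A Dl (re k g)))) by (apply Sg2_spec, le_refl).
        apply (re_mono (pair (comp e h) (idm Dl))) in U.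
        rewrite (re_retr (p2_pair _ _)) in U. exact U.
      * unfold k. rewrite !pair_comp, <- comp_assoc, p1_pair, p2_pair, comp_idl, comp_idr.
        reflexivity.
  - apply Sg2_spec. rewrite <- re_comp.
    replace (comp h p2) with (comp p2 k) by (unfold k; rewrite p2_pair; reflexivity).
    rewrite re_comp. apply re_mono. apply Sg2_spec. apply le_refl.
Qed.

Lemma Pi2_neg A G (g : P D (prod A G)) : Pi2f A G g = neg (Sg2f A G (neg g)).
Proof. unfold Sg2f. rewrite !neg_nn. reflexivity. Qed.

Lemma Pi2_BC A G Dl (h : Hom Dl G) (g : P D (prod A G)) :
  re h (Pi2f A G g) = Pi2f A Dl (re (pair p1 (comp h p2)) g).
Proof.
  rewrite (Pi2_neg g), neg_re, Sg2_BC, neg_re, <- Pi2_neg. reflexivity.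
Qed.

Lemma Pi1_BC G Dl A (h : Hom Dl G) (g : P D (prod G A)) :
  re h (Pi1f G A g) = Pi1f Dl A (re (pair (comp h p1) p2) g).
Proof.
  unfold Pi1f. rewrite Pi2_BC. f_equal. rewrite <- !re_comp. f_equal.
  unfold swap. rewrite !pair_comp, p1_pair, p2_pair, <- !comp_assoc, p1_pair, p2_pair.
  reflexivity.
Qed.

Lemma Sg1_BC G Dl A (h : Hom Dl G) (g : P D (prod G A)) :
  re h (Sg1f G A g) = Sg1f Dl A (re (pair (comp h p1) p2) g).
Proof. unfold Sg1f. rewrite neg_re, Pi1_BC, neg_re. reflexivity. Qed.

Lemma meet_top A (x y : P D A) : is_top x -> is_meet x y y.
Proof. intro Hx. split; [apply Hx|split; [apply le_refl|]]. intros c _ K. exact K. Qed.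

Lemma eq_tri (X : C) : exists delta : P D (prod X X),
      forall (a : P D (prod X X)) (t : P D X), is_top t ->
        (le t (re (pair (idm X) (idm X)) a) <-> le delta a).
Proof.
  exists (h_delta H X). intros a t Ht.
  destruct (h_elem H) as [_ Hel].
  set (psi := re (@p1 C X X) t).
  assert (Hmeet : is_meet (re p1 psi) (re (pair (comp p2 p1) p2) (h_delta H X))
                          (re (pair (comp p2 p1) p2) (h_delta H X))).
  { apply meet_top. apply top_re, top_re, Ht. }
  pose proof (Hel X X psi (re (pair (comp p2 p1) p2) a) _ Hmeet) as E.
  assert (R : re (pair (idm (prod X X)) p2) (re (pair (comp p2 p1) p2) a)
              = re p2 (re (pair (idm X) (idm X)) a)).
  { rewrite <- !re_comp. f_equal.
    rewrite !pair_comp, <- comp_assoc, p1_pair, p2_pair, comp_idr, !comp_idl. reflexivity. }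
  rewrite R in E.
  assert (S : comp (pair (comp p2 p1) p2) (pair (pair (@p1 C X X) p1) p2) = idm (prod X X)).
  { rewrite pair_comp, <- comp_assoc, !p1_pair, !p2_pair. apply pair_id. }
  split; intro K.
  - assert (K' : le psi (re p2 (re (pair (idm X) (idm X)) a))).
    { assert (T : is_top (re (pair (idm X) (idm X)) a)).
      { intro c. apply le_trans with t; [apply Ht|exact K]. }
      apply (top_re p2 T). }
    apply E in K'.
    apply (re_mono (pair (pair p1 p1) p2)) in K'.
    rewrite !(re_retr S) in K'. exact K'.
  - assert (K' := proj1 E (re_mono _ K)).
    apply (re_mono (pair (idm X) (idm X))) in K'.
    unfold psi in K'.
    rewrite (re_retr (p1_pair _ _)), (re_retr (p2_pair _ _)) in K'. exact K'.
Qed.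

Lemma impl_tri_main : tripos D.
Proof.
  split; [split|split;[|split]].
  - intro A. split; [exists (imp (botf A) (botf A)); intro c; apply Hd, le_refl|].
    split; [exists (botf A); apply botf_bot|].
    split; [apply meet_ex|]. split.
    + intros a b. destruct (meet_ex (neg a) (neg b)) as [m Hm]. exists (neg m). apply join_is, Hm.
    + intros a b. exists (imp a b). apply imp_is.
  - intros X A f. split; [intros t Ht; apply top_re, Ht|].
    split; [apply bpres_all|]. split; [apply meet_re|]. split.
    + intros a b j Hj. destruct (meet_ex (neg a) (neg b)) as [m Hm].
      rewrite (join_uniq Hj (join_is Hm)). rewrite neg_re. apply join_is.
      rewrite <- !neg_re. apply meet_re, Hm.
    + intros a b i Hi. rewrite (imp_uniq Hi (imp_is a b)). rewrite Hii. apply imp_is.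
  - exists Sg1f, Pi1f, Sg2f, Pi2f. split; [|split; [|split]].
    + intros. split; [apply Sg1_spec|apply Pi1_spec].
    + intros. split; [apply Sg2_spec|apply Pi2_spec].
    + intros. split; [apply Sg1_BC|apply Pi1_BC].
    + intros. split; [apply Sg2_BC|apply Pi2_BC].
  - intro X; exact (eq_tri X).
  - apply (h_higher H).
Qed.

End Part2.

Unset Implicit Arguments.
Set Strict Implicit.

Theorem mainTheorem16 (C : Cat) (D : Doctrine C) (H : Heaco D) :
  implicational D <-> tripos D.
Proof.
  split.
  - intros (imp & Hii & Hiii & Ha & Hb & Hc & Hd).
    eapply impl_tri_main; eauto.
  - apply tri_impl.
Qed.
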